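(* For every map $M$, $V\cap F\subseteq Z$.
   Context: A map is a triple $M=(C_M,v_M,f_M)$ where $C_M$ is a finite cubic graph (multiple edges allowed) and $v_M,f_M$ are disjoint perfect matchings whose union is a disjoint union of 4-cycles, the squares of $M$ (set $SQ(M)$). $a_M=E(C_M)\setminus(v_M\cup f_M)$; $z_M$ is the perfect matching on $V(C_M)$ formed by the diagonals of the squares; $Q_M=C_M\cup z_M$. For a map $X$, $G_X$ has as vertices the cycles of $v_X\cup a_X$, as edges the squares of $X$, each square joining the cycles containing its two $v_X$-edges. The dual is $D=(C_M,f_M,v_M)$, the phial is $P=(Q_M\setminus v_M,z_M,f_M)$, and edge sets of $G_M,G_D,G_P$ are identified with $SQ(M)$. $V,F,Z$ are the coboundary (edge-cut) spaces over $GF(2)$ of $G_M,G_D,G_P$, viewed as sets of subsets of $SQ(M)$. *)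

(* Defs.v *)
From mathcomp Require Import all_boot.
Set Implicit Arguments. Unset Strict Implicit. Unset Printing Implicit Defensive.

(* Encoding of a map M = (C_M, v_M, f_M) on the vertex set T of C_M.
   Each of v_M, f_M, a_M is a perfect matching of C_M, represented by the
   fixed-point-free involution sending a vertex to its partner.  The cubic
   multigraph C_M has edge set v_M ⊎ f_M ⊎ a_M (edges of different classes
   are different edges, so parallel edges are allowed; loops cannot occur).
   The condition "v_M ∪ f_M is a disjoint union of 4-cycles" says that every
   connected component of the 2-regular graph v_M ∪ f_M has exactly 4
   vertices. *)

Section Generic.
Variable T : finType.

Definition rel2 (g h : T -> T) : rel T := fun x y => (y == g x) || (y == h x).

Definition comp2 (g h : T -> T) (x : T) : {set T} := [set y | connect (rel2 g h) x y].

(* For a map X = (C, p, q) with remaining matching a, the graph G_X: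
   - vertices: the cycles of p ∪ a,
   - edges: the squares of X (components of p ∪ q),
   - a square s joins the cycles containing its two p-edges; for x ∈ s the
     two p-edges of s are {x, p x} and {q x, p (q x)}. *)
Variables (p q a : T -> T).

Definition Gverts : {set {set T}} := [set comp2 p a x | x in T].
Definition Gedges : {set {set T}} := [set comp2 p q x | x in T].
Definition Gend (x : T) : {set T} := comp2 p a x.

(* the edge cut (coboundary) of a vertex set S of G_X: the squares having
   exactly one of their two p-edges in a cycle belonging to S *)
Definition Gcut (S : {set {set T}}) : {set {set T}} :=
  [set s in Gedges | [exists x in s, (Gend x \in S) != (Gend (q x) \in S)]].

Definition in_cut_space (X : {set {set T}}) : Prop :=
  exists2 S : {set {set T}}, S \subset Gverts & X = Gcut S.
End Generic.

Record gmap (T : finType) := Map {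
  mv : T -> T;
  mf : T -> T;
  ma : T -> T;
  mv_invol : involutive mv;
  mf_invol : involutive mf;
  ma_invol : involutive ma;
  mv_fpf : forall x, mv x != x;
  mf_fpf : forall x, mf x != x;
  ma_fpf : forall x, ma x != x;
  sq4 : forall x, #|comp2 mv mf x| = 4
}.

(* z_M: the diagonal partner of x in its square x - v x - f(v x) - v(f(v x)) - x *)
Definition mz (T : finType) (M : gmap T) (x : T) : T := mf M (mv M x).

Definition squares (T : finType) (M : gmap T) : {set {set T}} := Gedges (mv M) (mf M).

Definition Vspace (T : finType) (M : gmap T) (X : {set {set T}}) : Prop :=
  in_cut_space (mv M) (mf M) (ma M) X.
Definition Fspace (T : finType) (M : gmap T) (X : {set {set T}}) : Prop :=
  in_cut_space (mf M) (mv M) (ma M) X.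
(* Z: coboundary space of G_P, P = (Q \ v, z, f), remaining matching
   (a ∪ f ∪ z) \ (z ∪ f) = a; the squares of P (components of z ∪ f) are the
   same vertex sets as the squares of M, which gives the identification. *)
Definition Zspace (T : finType) (M : gmap T) (X : {set {set T}}) : Prop :=
  in_cut_space (mz M) (mf M) (ma M) X.

(* Main.v *)
Require Import Defs.
From mathcomp Require Import all_boot.
Set Implicit Arguments. Unset Strict Implicit.

Lemma rel2_sym (T : finType) (g h : T -> T) :
  involutive g -> involutive h -> connect_sym (rel2 g h).
Proof.
move=> ig ih; apply: sym_connect_sym => x y.
by rewrite /rel2 (eq_sym y) (eq_sym y) (inv_eq ig) (inv_eq ih).
Qed.

Lemma comp2_g (T : finType) (g h : T -> T) x :
  involutive g -> involutive h -> comp2 g h (g x) = comp2 g h x.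
Proof.
move=> ig ih; apply/setP => y; rewrite !inE.
apply: same_connect; first exact: rel2_sym.
by rewrite (rel2_sym ig ih) connect1 // /rel2 eqxx.
Qed.

Lemma comp2_h (T : finType) (g h : T -> T) x :
  involutive g -> involutive h -> comp2 g h (h x) = comp2 g h x.
Proof.
move=> ig ih; apply/setP => y; rewrite !inE.
apply: same_connect; first exact: rel2_sym.
by rewrite (rel2_sym ig ih) connect1 // /rel2 eqxx orbT.
Qed.

Lemma L3 (T : finType) (g h : T -> T) (P : T -> bool) :
  (forall x, P (g x) = P x) -> (forall x, P (h x) = P x) ->
  forall x y, connect (rel2 g h) x y -> P y = P x.
Proof.
move=> Hg Hh x y /connectP [p pth ->] {y}.
elim: p x pth => //= y p IH x /andP [e pth].
by rewrite IH //; case/orP: e => /eqP ->.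
Qed.

Lemma Lex (T : finType) (M : gmap T) (Q : pred T) x :
  (forall y, Q (mv M y) = Q y) -> (forall y, Q (mf M y) = Q y) ->
  [exists y in comp2 (mv M) (mf M) x, Q y] = Q x.
Proof.
move=> Hv Hf; apply/existsP/idP => [[y /andP[yin qy]]|qx].
  by rewrite inE in yin; rewrite -(L3 Hv Hf yin).
by exists x; rewrite inE connect0.
Qed.

Lemma comm (T : finType) (M : gmap T) x : mf M (mv M x) = mv M (mf M x).
Proof.
have iv := mv_invol M; have jf := mf_invol M.
have fv := mv_fpf M; have ff := mf_fpf M.
apply/eqP; apply/negPn/negP => ne.
have hfv : mf M x != mv M x.
  apply: contra ne => /eqP e; by rewrite -e jf e iv.
have sub : {subset [:: x; mv M x; mf M x; mf M (mv M x); mv M (mf M x)]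
             <= comp2 (mv M) (mf M) x}.
  move=> y; rewrite !inE => /or4P [/eqP ->|/eqP ->|/eqP ->|/orP [] /eqP ->]; rewrite ?connect0 //.
  - by rewrite connect1 // /rel2 eqxx.
  - by rewrite connect1 // /rel2 eqxx orbT.
  - apply: (connect_trans (y := mv M x)); rewrite connect1 // /rel2 eqxx ?orbT //.
  - apply: (connect_trans (y := mf M x)); rewrite connect1 // /rel2 eqxx ?orbT //.
have U : uniq [:: x; mv M x; mf M x; mf M (mv M x); mv M (mf M x)].
  rewrite /= !inE !negb_or.
  have h1 : mf M (mv M x) != x by rewrite (inv_eq jf) eq_sym.
  have h2 : mv M (mf M x) != x by rewrite (inv_eq iv).
  have h3 : mv M x != mf M (mv M x) by rewrite eq_sym ff.
  have h4 : mv M (mv M x) != mf M x by rewrite iv eq_sym ff.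
  have h5 : mf M x != mf M (mv M x) by rewrite (inj_eq (inv_inj jf)) eq_sym fv.
  have h6 : mf M x != mv M (mf M x) by rewrite eq_sym fv.
  rewrite !(eq_sym x) fv ff h1 h2 (eq_sym (mv M x) (mf M x)) hfv h3.
  by rewrite (inj_eq (inv_inj iv)) (eq_sym x) ff h5 h6 ne.
have := sq4 M x; move: (subset_leq_card (introT subsetP sub)).
by rewrite (card_uniqP U) /= => + e; rewrite e.
Qed.

Lemma comp2_fv (T : finType) (M : gmap T) x :
  comp2 (mf M) (mv M) x = comp2 (mv M) (mf M) x.
Proof.
apply/setP => y; rewrite !inE; apply: eq_connect => a b; by rewrite /rel2 orbC.
Qed.

Lemma comp2_zf (T : finType) (M : gmap T) x :
  comp2 (mz M) (mf M) x = comp2 (mv M) (mf M) x.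
Proof.
have jf := mf_invol M.
apply/setP => y; rewrite !inE; apply/idP/idP; apply: connect_sub => b c;
  rewrite /rel2 /mz => /orP [] /eqP ->.
- apply: (connect_trans (y := mv M b)); rewrite connect1 // /rel2 eqxx ?orbT //.
- by rewrite connect1 // /rel2 eqxx orbT.
- apply: (connect_trans (y := mf M (mv M b))); rewrite connect1 // /rel2 /mz ?jf eqxx ?orbT //.
- by rewrite connect1 // /rel2 eqxx orbT.
Qed.

Theorem theorem2p5 (T : finType) (M : gmap T) (X : {set {set T}}) :
  Vspace M X -> Fspace M X -> Zspace M X.
Proof.
move=> [SV SVsub hV] [SF SFsub hF].
have iv := mv_invol M; have jf := mf_invol M; have ia := ma_invol M.
pose al x := comp2 (mv M) (ma M) x \in SV.
pose be x := comp2 (mf M) (ma M) x \in SF.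
pose ga x := al x != be x.
have alv x : al (mv M x) = al x by rewrite /al comp2_g.
have ala x : al (ma M x) = al x by rewrite /al comp2_h.
have bef x : be (mf M x) = be x by rewrite /be comp2_g.
have bea x : be (ma M x) = be x by rewrite /be comp2_h.
have cm := comm M.
have Xs x : (comp2 (mv M) (mf M) x \in X) = (al x != al (mf M x)).
  rewrite hV /Gcut inE imset_f //= /Gend.
  apply: (Lex (Q := fun y => al y != al (mf M y))) => y.
    by rewrite cm !alv.
  by rewrite jf eq_sym.
have XsF x : (comp2 (mv M) (mf M) x \in X) = (be x != be (mv M x)).
  rewrite hF /Gcut inE -comp2_fv imset_f //= /Gend comp2_fv.
  apply: (Lex (Q := fun y => be y != be (mv M y))) => y.
    by rewrite iv eq_sym.
  by rewrite -cm !bef.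
have gaz x : ga (mz M x) = ga x.
  rewrite /ga /mz cm alv -cm bef.
  move: (Xs x); rewrite XsF.
  by case: (al x) (al (mf M x)) (be x) (be (mv M x)) => [] [] [] [].
have gaa x : ga (ma M x) = ga x by rewrite /ga ala bea.
pose SZ := (comp2 (mz M) (ma M)) @: [set x | ga x].
have inSZ x : (comp2 (mz M) (ma M) x \in SZ) = ga x.
  apply/imsetP/idP => [[y]|gx]; last by exists x; rewrite ?inE.
  rewrite inE => gy e.
  have : x \in comp2 (mz M) (ma M) y by rewrite -e inE connect0.
  by rewrite inE => /(L3 gaz gaa) ->.
exists SZ.
  by apply/subsetP => _ /imsetP [x _ ->]; apply: imset_f.
have GE : Gedges (mz M) (mf M) = Gedges (mv M) (mf M).
  by apply: eq_imset => x; rewrite comp2_zf.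
apply/setP => s; rewrite /Gcut inE GE.
case sin : (s \in Gedges (mv M) (mf M)); last first.
  by rewrite hV inE sin.
case/imsetP: sin => x _ ->; rewrite Xs /=.
rewrite /Gend.
under eq_existsb => y do rewrite !inSZ.
rewrite (Lex (Q := fun y => ga y != ga (mf M y))).
- by rewrite /ga bef; case: (al x) (al (mf M x)) (be x) => [] [] [].
- move=> y /=.
  have -> : ga (mv M y) = ga (mf M y).
    by rewrite -gaz /mz iv.
  have -> : ga (mf M (mv M y)) = ga y by rewrite -[mf M (mv M y)]/(mz M y) gaz.
  by rewrite eq_sym.
- by move=> y /=; rewrite jf eq_sym.
Qed.
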